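(* For $\varepsilon\in[0,1]$ let $\Phi_{\mathrm{feas}}(\varepsilon)=\{(\pi_1,\dots,\pi_N,\pi_c)\in\Pi^{N+1}:\|\pi_i-\pi_c\|_\infty\le\varepsilon\ \text{for all } i\}$ and $$S^{\mathrm{CAL}}(\varepsilon)=\arg\min_{(\pi_1,\dots,\pi_N,\pi_c)\in\Phi_{\mathrm{feas}}(\varepsilon)}\sum_{i=1}^N\|\Phi^\top\mu^{\pi_i}_i-\Phi^\top\mu^{\pi^{E_i}}_i\|_1 .$$ Then the set-valued map $S^{\mathrm{CAL}}:[0,1]\rightrightarrows\Pi^{N+1}$ is upper semicontinuous at $\varepsilon=0$.
   Context: Let $\mathcal{S},\mathcal{A}$ be finite sets, $\gamma\in(0,1)$, $\rho$ a probability distribution on $\mathcal{S}$, and for $i=1,\dots,N$ environment $i$ is the Markov decision process $(\mathcal{S},\mathcal{A},P^i,\gamma,\rho)$. $\Pi$ is the set of stationary policies $\pi:\mathcal{S}\to\Delta(\mathcal{A})$, identified with vectors $(\pi(s,a))_{(s,a)}\in\mathbb{R}^{|\mathcal{S}||\mathcal{A}|}$, and $\|\pi-\pi'\|_\infty=\max_{(s,a)}|\pi(s,a)-\pi'(s,a)|$. $\mu^\pi_i(s,a)=\sum_{t\ge0}\gamma^t\mathbb{P}^{\pi,i}_\rho[s_t=s,a_t=a]$ is the discounted occupation measure (trajectory law: $s_0\sim\rho$, $a_t\sim\pi(s_t,\cdot)$, $s_{t+1}\sim P^i(\cdot\mid s_t,a_t)$). Expert policies $\pi^{E_i}\in\Pi$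 and a cost basis matrix $\Phi\in\mathbb{R}^{|\mathcal{S}||\mathcal{A}|\times n_c}$ with columns of sup-norm at most $1$ are given. A set-valued map $F:X\rightrightarrows Y$ is upper semicontinuous at $x_0$ if for every neighborhood $U$ of the set $F(x_0)$ there is a neighborhood $W$ of $x_0$ with $F(x)\subset U$ for all $x\in W$. *)

(* Defs.v *)
From HB Require Import structures.
From mathcomp Require Import all_boot all_order all_algebra.
From mathcomp Require Import all_classical all_reals all_analysis.
Set Implicit Arguments. Unset Strict Implicit. Unset Printing Implicit Defensive.
Import Order.TTheory GRing.Theory Num.Theory.
Local Open Scope ring_scope.
Local Open Scope classical_set_scope.

Section Defs.
Context {R : realType} {S A : finType}.

(* a stationary policy, identified with the vector (pi(s,a))_{(s,a)} *)
Definition policy := S -> A -> R.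

Definition is_policy (pi : policy) : Prop :=
  (forall s a, 0 <= pi s a) /\ (forall s, \sum_(a : A) pi s a = 1).

Definition is_distr (rho : S -> R) : Prop :=
  (forall s, 0 <= rho s) /\ \sum_(s : S) rho s = 1.

(* transition kernel: P s a s' = P(s' | s, a) *)
Definition is_kernel (P : S -> A -> S -> R) : Prop :=
  forall s a, is_distr (P s a).

Definition supdist (pi pi' : policy) : R :=
  \big[Num.max/0]_(s : S) \big[Num.max/0]_(a : A) `|pi s a - pi' s a|.

(* law of s_t under the trajectory law: s_0 ~ rho, a_t ~ pi(s_t,.),
   s_{t+1} ~ P(. | s_t, a_t) *)
Fixpoint state_law (rho : S -> R) (P : S -> A -> S -> R) (pi : policy)
  (t : nat) : S -> R :=
  match t with
  | 0%N => rho
  | t'.+1 => fun s' => \sum_(s : S) \sum_(a : A)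
                 state_law rho P pi t' s * pi s a * P s a s'
  end.

Definition sa_law rho P pi t (s : S) (a : A) : R := state_law rho P pi t s * pi s a.

Definition occ (gamma : R) rho P pi (s : S) (a : A) : R :=
  limn (fun n => \sum_(0 <= t < n) gamma ^+ t * sa_law rho P pi t s a).

(* || Phi^T mu - Phi^T mu' ||_1, Phi : |S||A| x nc, Phi s a k = Phi_{(s,a),k} *)
Definition feat_l1 (nc : nat) (Phi : S -> A -> 'I_nc -> R) (mu mu' : S -> A -> R) : R :=
  \sum_(k < nc) `| \sum_(s : S) \sum_(a : A) Phi s a k * mu s a
                 - \sum_(s : S) \sum_(a : A) Phi s a k * mu' s a |.

(* elements of Pi^{N+1}: ((pi_1,...,pi_N), pi_c) *)
Definition joint (N : nat) := (('I_N -> policy) * policy)%type.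

Definition feas (N : nat) (eps : R) (x : joint N) : Prop :=
  (forall i, is_policy (x.1 i)) /\ is_policy x.2 /\
  (forall i, supdist (x.1 i) x.2 <= eps).

Definition cal_obj (N nc : nat) (gamma : R) (rho : S -> R)
  (P : 'I_N -> S -> A -> S -> R) (piE : 'I_N -> policy)
  (Phi : S -> A -> 'I_nc -> R) (x : joint N) : R :=
  \sum_(i < N) feat_l1 Phi (occ gamma rho (P i) (x.1 i))
                           (occ gamma rho (P i) (piE i)).

Definition S_CAL (N nc : nat) (gamma : R) rho (P : 'I_N -> S -> A -> S -> R) piE (Phi : S -> A -> 'I_nc -> R) (eps : R) : set (joint N) :=
  [set x | feas eps x /\
     forall y, feas eps y -> cal_obj gamma rho P piE Phi x <= cal_obj gamma rho P piE Phi y].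

Definition jdist (N : nat) (x y : joint N) : R :=
  Num.max (\big[Num.max/0]_(i < N) supdist (x.1 i) (y.1 i)) (supdist x.2 y.2).

Definition jopen (N : nat) (V : set (joint N)) : Prop :=
  forall x, V x -> exists2 r : R, 0 < r & forall y, jdist x y < r -> V y.

End Defs.

(* Main.v *)
Require Import Defs.
From HB Require Import structures.
From mathcomp Require Import all_boot all_order all_algebra.
From mathcomp Require Import all_classical all_reals all_analysis.
From mathcomp Require Import ring lra.
Set Implicit Arguments. Unset Strict Implicit.
Import Order.TTheory GRing.Theory Num.Theory.
Local Open Scope ring_scope.
Local Open Scope classical_set_scope.

Section L.
Context {R : realType} {S A : finType}.
Implicit Types (pi : @policy R S A) (rho : S -> R) (P : S -> A -> S -> R).

Lemma state_law_ge0 rho P pi : is_distr rho -> is_kernel P -> is_policy pi ->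
  forall t s, 0 <= state_law rho P pi t s.
Proof.
move=> [r0 _] kP [p0 _]; elim=> [|t IH] s //=.
apply: sumr_ge0 => s0 _; apply: sumr_ge0 => a _.
by rewrite !mulr_ge0 //; case: (kP s0 a) => ->.
Qed.

Lemma state_law_sum1 rho P pi : is_distr rho -> is_kernel P -> is_policy pi ->
  forall t, \sum_s state_law rho P pi t s = 1.
Proof.
move=> [r0 r1] kP [p0 p1]; elim=> [|t IH] //=.
rewrite exchange_big /= -[RHS]IH; apply: eq_bigr => s _.
rewrite exchange_big /= -[RHS]mulr1 -(p1 s) mulr_sumr; apply: eq_bigr => a _.
by rewrite -mulr_sumr; case: (kP s a) => _ ->; rewrite mulr1.
Qed.

Lemma policy_le1 pi s a : is_policy pi -> pi s a <= 1.
Proof.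
move=> [p0 p1]; rewrite -(p1 s) (bigD1 a) //= lerDl.
by apply: sumr_ge0 => b _; apply: p0.
Qed.

Lemma state_law_le1 rho P pi : is_distr rho -> is_kernel P -> is_policy pi ->
  forall t s, state_law rho P pi t s <= 1.
Proof.
move=> hr kP hp t s; rewrite -(state_law_sum1 hr kP hp t) (bigD1 s) //= lerDl.
by apply: sumr_ge0 => b _; apply: state_law_ge0.
Qed.

Lemma state_diff rho P pi pi' d : is_distr rho -> is_kernel P -> is_policy pi ->
  is_policy pi' -> (forall s a, `|pi s a - pi' s a| <= d) ->
  forall t, \sum_s `|state_law rho P pi t s - state_law rho P pi' t s| <= t%:R * #|A|%:R * d.
Proof.
move=> hr kP hp hp' hd; elim=> [|t IH] /=.
  by rewrite mul0r mul0r big1 // => s _; rewrite subrr normr0.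
pose L := state_law rho P pi t; pose L' := state_law rho P pi' t.
apply: (@le_trans _ _ (\sum_s \sum_a `|L s * pi s a - L' s * pi' s a|)).
  apply: (@le_trans _ _ (\sum_s' \sum_s \sum_a `|L s * pi s a - L' s * pi' s a| * P s a s')).
    apply: ler_sum => s' _; rewrite -sumrB; apply: (le_trans (ler_norm_sum _ _ _)).
    apply: ler_sum => s _; rewrite -sumrB; apply: (le_trans (ler_norm_sum _ _ _)).
    apply: ler_sum => a _; rewrite -mulrBl normrM; apply: ler_wpM2l => //.
    by case: (kP s a) => h _; rewrite ger0_norm.
  rewrite exchange_big /=; apply: ler_sum => s _; rewrite exchange_big /=.
  apply: ler_sum => a _; rewrite -mulr_sumr; case: (kP s a) => _ ->.
  by rewrite mulr1.
have key : forall s a, `|L s * pi s a - L' s * pi' s a| <= `|L s - L' s| * pi s a + L' s * d.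
  move=> s a.
  have -> : L s * pi s a - L' s * pi' s a = (L s - L' s) * pi s a + L' s * (pi s a - pi' s a) by ring.
  apply: (le_trans (ler_normD _ _)); apply: lerD.
    by rewrite normrM (ger0_norm (hp.1 s a)).
  rewrite normrM ger0_norm; last exact: state_law_ge0.
  by apply: ler_wpM2l => //; apply: state_law_ge0.
apply: (@le_trans _ _ (\sum_s (`|L s - L' s| + L' s * (#|A|%:R * d)))).
  apply: ler_sum => s _; apply: (le_trans (ler_sum _ (fun a _ => key s a))).
  rewrite big_split /= -mulr_sumr hp.2 mulr1 lerD //.
  rewrite -mulr_sumr; apply: ler_wpM2l; first exact: state_law_ge0.
  by rewrite sumr_const mulr_natl.
rewrite big_split /= -mulr_suml (state_law_sum1 hr kP hp') mul1r.
have -> : t.+1%:R * #|A|%:R * d = t%:R * #|A|%:R * d + #|A|%:R * d by rewrite -natr1; ring.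
by rewrite lerD2r; exact: IH.
Qed.


Lemma sa_diff rho P pi pi' d : is_distr rho -> is_kernel P -> is_policy pi ->
  is_policy pi' -> (forall s a, `|pi s a - pi' s a| <= d) ->
  forall t s a, `|sa_law rho P pi t s a - sa_law rho P pi' t s a| <= (t%:R * #|A|%:R + 1) * d.
Proof.
move=> hr kP hp hp' hd t s a; rewrite /sa_law.
set L := state_law rho P pi t; set L' := state_law rho P pi' t.
have -> : L s * pi s a - L' s * pi' s a = (L s - L' s) * pi s a + L' s * (pi s a - pi' s a) by ring.
apply: (le_trans (ler_normD _ _)); rewrite [in X in _ <= X]mulrDl mul1r; apply: lerD.
  rewrite normrM (ger0_norm (hp.1 s a)).
  apply: (@le_trans _ _ (`|L s - L' s| * 1)).
    by apply: ler_wpM2l => //; exact: policy_le1.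
  rewrite mulr1; apply: le_trans (state_diff hr kP hp hp' hd t).
  by rewrite (bigD1 s) //= lerDl; apply: sumr_ge0.
rewrite normrM ger0_norm; last exact: state_law_ge0.
apply: (@le_trans _ _ (1 * d)); last by rewrite mul1r.
apply: ler_pM; [exact: state_law_ge0 | exact: normr_ge0 | exact: state_law_le1 | exact: hd].
Qed.

Lemma geo_id (g : R) n : (\sum_(0 <= t < n) g ^+ t * t.+1%:R) * (1 - g) ^+ 2
   = 1 - n.+1%:R * g ^+ n + n%:R * g ^+ n.+1.
Proof.
elim: n => [|n IH]; first by rewrite big_geq // mul0r expr0 mul0r mulr1 subrr addr0.
rewrite big_nat_recr //= mulrDl IH !exprS -!natr1; ring.
Qed.

Lemma geo_bound (g : R) n : 0 <= g -> g < 1 ->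
  \sum_(0 <= t < n) g ^+ t * t.+1%:R <= (1 - g) ^-2.
Proof.
move=> g0 g1; have hp : 0 < (1 - g) ^+ 2 by rewrite exprn_gt0 // subr_gt0.
rewrite -[X in _ <= X]mul1r ler_pdivlMr // geo_id.
have h1 : n%:R * g ^+ n.+1 <= n.+1%:R * g ^+ n.
  rewrite exprS -natr1; have x0 : 0 <= g ^+ n by rewrite exprn_ge0.
  have m0 : 0 <= n%:R :> R by rewrite ler0n.
  have g1p : 0 <= 1 - g by rewrite subr_ge0 ltW.
  have := mulr_ge0 (mulr_ge0 m0 x0) g1p.
  nra.
lra.
Qed.

Definition psum (gamma : R) rho P pi s a n :=
  \sum_(0 <= t < n) gamma ^+ t * sa_law rho P pi t s a.

Lemma psum_cvg gamma rho P pi s a : 0 <= gamma < 1 -> is_distr rho -> is_kernel P -> is_policy pi ->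
  cvgn (psum gamma rho P pi s a).
Proof.
move=> /andP[g0 g1] hr kP hp; apply: nondecreasing_is_cvgn.
  apply/nondecreasing_seqP => n; rewrite /psum big_nat_recr //= lerDl.
  by rewrite mulr_ge0 ?exprn_ge0 // /sa_law mulr_ge0 //; [exact: state_law_ge0 | exact: hp.1].
exists ((1 - gamma) ^-2) => _ [n _ <-]; apply: le_trans (geo_bound n g0 g1).
apply: ler_sum => t _; apply: ler_wpM2l; first by rewrite exprn_ge0.
apply: (@le_trans _ _ 1); last by rewrite ler1n.
rewrite /sa_law -[X in _ <= X]mul1r; apply: ler_pM; rewrite ?hp.1 ?state_law_ge0 //.
  exact: state_law_le1.
exact: policy_le1.
Qed.

Lemma occ_lip gamma rho P pi pi' d : 0 <= gamma < 1 -> is_distr rho -> is_kernel P -> is_policy pi ->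
  is_policy pi' -> (forall s a, `|pi s a - pi' s a| <= d) ->
  forall s a, `|occ gamma rho P pi s a - occ gamma rho P pi' s a|
     <= (#|A|%:R + 1) * (1 - gamma) ^-2 * d.
Proof.
move=> gg hr kP hp hp' hd s a; have /andP[g0 g1] := gg.
have d0 : 0 <= d by apply: le_trans (hd s a).
set C := (#|A|%:R + 1) * (1 - gamma) ^-2 * d.
have hb : forall n, `|psum gamma rho P pi s a n - psum gamma rho P pi' s a n| <= C.
  move=> n; rewrite /psum -sumrB; apply: (le_trans (ler_norm_sum _ _ _)).
  apply: (@le_trans _ _ (\sum_(0 <= t < n) gamma ^+ t * t.+1%:R * ((#|A|%:R + 1) * d))).
    apply: ler_sum => t _; rewrite -mulrBr normrM ger0_norm ?exprn_ge0 // -mulrA.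
    apply: ler_wpM2l; first by rewrite exprn_ge0.
    apply: le_trans (sa_diff hr kP hp hp' hd t s a) _.
    rewrite mulrA; apply: ler_wpM2r => //.
    have t0 : 0 <= t%:R :> R by rewrite ler0n.
    have a0 : 0 <= #|A|%:R :> R by rewrite ler0n.
    rewrite -natr1; have := mulr_ge0 t0 a0; nra.
  rewrite -mulr_suml; apply: le_trans (ler_wpM2r _ (geo_bound n g0 g1)) _.
    by rewrite mulr_ge0 // addr_ge0.
  by rewrite /C mulrCA mulrA.
have c1 : cvgn (psum gamma rho P pi s a) by exact: psum_cvg.
have c2 : cvgn (psum gamma rho P pi' s a) by exact: psum_cvg.
rewrite /occ -limB //; rewrite ler_norml; apply/andP; split.
  apply: limr_ge; first exact: is_cvgB.
  by apply: nearW => n; have := hb n; rewrite ler_norml => /andP[].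
apply: limr_le; first exact: is_cvgB.
by apply: nearW => n; have := hb n; rewrite ler_norml => /andP[].
Qed.


Lemma feat_lip nc (Phi : S -> A -> 'I_nc -> R) (X Y E : S -> A -> R) c :
  (forall s a k, `|Phi s a k| <= 1) -> (forall s a, `|X s a - Y s a| <= c) ->
  feat_l1 Phi X E <= feat_l1 Phi Y E + \sum_(k < nc) \sum_(s : S) \sum_(a : A) c.
Proof.
move=> hPhi hc; rewrite /feat_l1 -big_split /=; apply: ler_sum => k _.
set aX := \sum_s \sum_a Phi s a k * X s a.
set aY := \sum_s \sum_a Phi s a k * Y s a.
set e := \sum_s \sum_a Phi s a k * E s a.
have -> : aX - e = (aX - aY) + (aY - e) by ring.
apply: (le_trans (ler_normD _ _)); rewrite [X in _ <= X]addrC; apply: lerD => //.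
rewrite /aX /aY -sumrB; apply: (le_trans (ler_norm_sum _ _ _)); apply: ler_sum => s _.
rewrite -sumrB; apply: (le_trans (ler_norm_sum _ _ _)); apply: ler_sum => a _.
rewrite -mulrBr normrM -[X in _ <= X]mul1r; apply: ler_pM => //.
Qed.

End L.

Lemma obj_lip (R : realType) (S A : finType) (N nc : nat) (gamma : R)
  (rho : S -> R) (P : 'I_N -> S -> A -> S -> R) (piE : 'I_N -> @policy R S A)
  (Phi : S -> A -> 'I_nc -> R) (x y : joint N) d :
  0 <= gamma < 1 -> is_distr rho -> (forall i, is_kernel (P i)) ->
  (forall s a k, `|Phi s a k| <= 1) ->
  (forall i, is_policy (x.1 i)) -> (forall i, is_policy (y.1 i)) ->
  (forall i s a, `|x.1 i s a - y.1 i s a| <= d) ->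
  cal_obj gamma rho P piE Phi x <= cal_obj gamma rho P piE Phi y +
    (\sum_(i < N) \sum_(k < nc) \sum_(s : S) \sum_(a : A) ((#|A|%:R + 1) * (1 - gamma) ^-2)) * d.
Proof.
move=> gg hr kP hPhi hx hy hd; rewrite /cal_obj mulr_suml -big_split /=.
apply: ler_sum => i _.
apply: le_trans (@feat_lip R S A nc Phi _ (occ gamma rho (P i) (y.1 i)) (occ gamma rho (P i) (piE i)) ((#|A|%:R + 1) * (1 - gamma) ^-2 * d) hPhi _) _.
  move=> s a; exact: occ_lip.
rewrite lerD2l le_eqVlt; apply/orP; left; apply/eqP.
rewrite mulr_suml; apply: eq_bigr => k _; rewrite mulr_suml; apply: eq_bigr => s _; by rewrite mulr_suml.
Qed.

Import numFieldNormedType.Exports.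

Lemma incr_ge (g : nat -> nat) : increasing_seq g -> forall n, (n <= g n)%N.
Proof.
move=> hg; elim=> [|n IH] //.
have h := hg n.+1 n; rewrite !leEnat in h.
have : (g n < g n.+1)%N by rewrite ltnNge h ltnn.
by apply: leq_ltn_trans.
Qed.

Lemma subseq_cvgn (R : realType) (v : nat -> R) (g : nat -> nat) :
  increasing_seq g -> cvgn v -> cvgn (v \o g).
Proof.
move=> hg cv; apply/cvg_ex; exists (limn v).
apply: cvg_comp cv; apply/cvgnyPge => M; near=> n.
apply: leq_trans (incr_ge hg n); near: n; exact: nbhs_infty_ge.
Unshelve. all: by end_near.
Qed.

Lemma extract (R : realType) (I : finType) (u : nat -> I -> R) :
  (forall n i, `|u n i| <= 1) ->
  exists f : nat -> nat, increasing_seq f /\ forall i, cvgn (fun n => u (f n) i).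
Proof.
move=> hb.
suff: forall l : seq I, exists f : nat -> nat, increasing_seq f /\
   forall i, i \in l -> cvgn (fun n => u (f n) i).
  move=> /(_ (enum I)) [f [hf hc]]; exists f; split => // i; apply: hc; by rewrite mem_enum.
elim=> [|i l [f [hf hc]]]; first by exists id; split.
have bd : bounded_fun (fun n => u (f n) i).
  exists 1; split; first exact: num_real.
  by move=> M M1 n _; apply: le_trans (hb _ _) (ltW M1).
have [g hg cg] := bolzano_weierstrass bd.
exists (f \o g); split.
  by move=> m n /=; rewrite hf -leEnat hg.
move=> j; rewrite inE => /orP [/eqP -> //|jl].
exact: (subseq_cvgn hg (hc j jl)).
Qed.

Section H.
Context {R : realType} {S A : finType}.

Lemma pt_le_supdist (pi pi' : @policy R S A) s a : `|pi s a - pi' s a| <= supdist pi pi'.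
Proof. rewrite /supdist; apply: le_trans (le_bigmax _ _ s); exact: le_bigmax. Qed.

Lemma supdist_lt (r : R) (pi pi' : @policy R S A) : 0 < r ->
  (forall s a, `|pi s a - pi' s a| < r) -> supdist pi pi' < r.
Proof.
move=> r0 h; apply/bigmax_ltP; split => // s _; apply/bigmax_ltP; split => // a _; exact: h.
Qed.

Lemma supdist_le (r : R) (pi pi' : @policy R S A) : 0 <= r ->
  (forall s a, `|pi s a - pi' s a| <= r) -> supdist pi pi' <= r.
Proof.
move=> r0 h; apply/bigmax_leP; split => // s _; apply/bigmax_leP; split => // a _; exact: h.
Qed.

End H.

Lemma eq0_small (R : realType) (z : R) : (forall e, 0 < e -> `|z| < e) -> z = 0.
Proof.
move=> h; apply/eqP; apply: contrapT => /negP nz.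
have hz : 0 < `|z| by rewrite normr_gt0.
by have := h `|z| hz; rewrite ltxx.
Qed.

Theorem lemma4 (R : realType) (S A : finType) (N nc : nat) (gamma : R)
  (rho : S -> R) (P : 'I_N -> S -> A -> S -> R) (piE : 'I_N -> @policy R S A)
  (Phi : S -> A -> 'I_nc -> R) :
  0 < gamma < 1 -> is_distr rho -> (forall i, is_kernel (P i)) ->
  (forall i, is_policy (piE i)) -> (forall s a k, `|Phi s a k| <= 1) ->
  (* upper semicontinuity of eps |-> S^CAL(eps) on [0,1] at eps = 0 *)
  forall V : set (joint N),
    jopen V -> S_CAL gamma rho P piE Phi 0 `<=` V ->
    exists2 delta : R, 0 < delta &
      forall eps : R, 0 <= eps <= 1 -> eps < delta ->
        S_CAL gamma rho P piE Phi eps `<=` V.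
Proof.
move=> /andP[g0 g1] hr kP hE hPhi V oV sub.
have gg : 0 <= gamma < 1 by rewrite (ltW g0) g1.
apply: contrapT => H.
have hn : forall n : nat, exists ex : R * joint N,
   [/\ 0 <= ex.1, ex.1 < n.+1%:R^-1, S_CAL gamma rho P piE Phi ex.1 ex.2 & ~ V ex.2].
  move=> n; apply: contrapT => hno; apply: H.
  exists (n.+1%:R^-1); first by rewrite invr_gt0 ltr0n.
  move=> eps /andP[e0 _] elt x Sx; apply: contrapT => nVx; apply: hno; by exists (eps, x).
case: (choice hn) => ex hex.
pose xs n := (ex n).2; pose es n := (ex n).1.
have feasn : forall n, feas (es n) (xs n) by move=> n; case: (hex n) => _ _ [].
have pol2 : forall n, is_policy (xs n).2 by move=> n; case: (feasn n) => _ [].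
have pol1 : forall n i, is_policy ((xs n).1 i) by move=> n; case: (feasn n).
have bound : forall n (sa : S * A), `|(xs n).2 sa.1 sa.2| <= 1.
  move=> n [s a]; rewrite ger0_norm; [exact: policy_le1 | exact: (pol2 n).1].
have [phi [hphi hcv]] := extract bound.
pose p : @policy R S A := fun s a => limn (fun n => (xs (phi n)).2 s a).
have nearfact : forall e, 0 < e -> \forall n \near \oo,
   (forall s a, `|p s a - (xs (phi n)).2 s a| < e) /\ es (phi n) < e.
  move=> e e0.
  have h1 : \forall n \near \oo, forall sa : S * A,
      `|p sa.1 sa.2 - (xs (phi n)).2 sa.1 sa.2| < e.
    apply: filter_forall => -[s a]; near=> n.
    suff hh : `|lim ((fun n => (xs (phi n)).2 s a) @ \oo) - (xs (phi n)).2 s a| < e by [].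
    near: n; exact: (cvgr_dist_lt _ _ (hcv (s, a)) _ e0).
  near=> n; split.
    have hh : forall sa : S * A, `|p sa.1 sa.2 - (xs (phi n)).2 sa.1 sa.2| < e.
      by near: n; exact: h1.
    by move=> s a; exact: (hh (s, a)).
  have [_ h2 _ _] := hex (phi n).
  apply: (lt_le_trans h2).
  apply: (@le_trans _ _ (n.+1%:R^-1)).
    by rewrite lef_pV2 ?posrE ?ltr0n // ler_nat ltnS incr_ge.
  rewrite ltW // invf_plt ?posrE ?ltr0n //.
  have : e^-1 <= n%:R by near: n; exact: nbhs_infty_ger.
  by move=> h; apply: le_lt_trans h _; rewrite ltr_nat.
have pol_p : is_policy p.
  split.
    move=> s a; apply: limr_ge; first exact: (hcv (s, a)).
    by apply: nearW => n; exact: (pol2 _).1.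
  move=> s; apply/eqP; rewrite -subr_eq0; apply/eqP; apply: eq0_small => e e0.
  have c0 : 0 <= #|A|%:R :> R by rewrite ler0n.
  have e'0 : 0 < e / (#|A|%:R + 1) by rewrite divr_gt0 // ltr_wpDl.
  have [M _ hM] := nearfact _ e'0; have [hn1 _] := hM M (leqnn M).
  rewrite -((pol2 (phi M)).2 s) -sumrB; apply: le_lt_trans (ler_norm_sum _ _ _) _.
  apply: (@le_lt_trans _ _ (\sum_(a : A) e / (#|A|%:R + 1))).
    by apply: ler_sum => a _; exact: ltW.
  have -> : \sum_(a : A) e / (#|A|%:R + 1) = #|A|%:R * (e / (#|A|%:R + 1)) by rewrite sumr_const mulr_natl.
  rewrite mulrA ltr_pdivrMr ?ltr_wpDl //; nra.
pose xstar : joint N := ((fun _ => p), p).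
have tri : forall n i s a, `|p s a - (xs n).1 i s a| <= `|p s a - (xs n).2 s a| + es n.
  move=> n i s a; have h2 := (feasn n).2.2 i; have h1 := pt_le_supdist ((xs n).1 i) (xs n).2 s a.
  have -> : p s a - (xs n).1 i s a = (p s a - (xs n).2 s a) + ((xs n).2 s a - (xs n).1 i s a) by ring.
  apply: le_trans (ler_normD _ _) _; rewrite lerD2l distrC; exact: le_trans h1 h2.
have Sx : S_CAL gamma rho P piE Phi 0 xstar.
  split.
    split; first by move=> i; exact: pol_p.
    split; first exact: pol_p.
    by move=> i; apply: supdist_le => // s a; rewrite subrr normr0.
  move=> y fy; apply/ler_addgt0Pr => e e0.
  set K := (\sum_(i < N) \sum_(k < nc) \sum_(s : S) \sum_(a : A) ((#|A|%:R + 1) * (1 - gamma) ^-2)).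
  have K0 : 0 <= K.
    apply: sumr_ge0 => i _; apply: sumr_ge0 => k _; apply: sumr_ge0 => s _; apply: sumr_ge0 => a _.
    by rewrite mulr_ge0 ?invr_ge0 ?exprn_ge0 ?subr_ge0 ?ltW // addr_ge0 ?ler0n.
  have e'0 : 0 < e / (2 * (K + 1)) by rewrite divr_gt0 // mulr_gt0 // ltr_wpDl.
  have [M _ hM] := nearfact _ e'0; have [hn1 hn2] := hM M (leqnn M).
  set e' := e / (2 * (K + 1)) in e'0 hn1 hn2.
  have hd : forall i s a, `|xstar.1 i s a - (xs (phi M)).1 i s a| <= 2 * e'.
    move=> i s a; apply: le_trans (tri _ i s a) _.
    by rewrite mulr2n mulrDl mul1r lerD // ltW.
  have hl := obj_lip piE (x := xstar) gg hr kP hPhi (fun _ => pol_p) (pol1 (phi M)) hd.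
  have [_ _ [_ opt] _] := hex (phi M).
  have hy : feas (es (phi M)) y.
    case: fy => [f1 [f2 f3]]; split => //; split => // i; apply: le_trans (f3 i) _.
    by case: (hex (phi M)).
  have := opt y hy; rewrite -/(xs (phi M)) => hxy.
  apply: le_trans hl _; rewrite lerD //.
  have -> : K * (2 * e') = e * (K / (K + 1)).
    rewrite /e'; field; rewrite gt_eqF // ltr_wpDl //.
  rewrite -[X in _ <= X]mulr1 ler_wpM2l ?ltW // ltr_pdivrMr ?ltr_wpDl // mul1r ltrDl ltr01 //.
have Vx := sub _ Sx.
have [r r0 hrV] := oV _ Vx.
have r3 : 0 < r / 3 by rewrite divr_gt0.
have [M _ hM] := nearfact _ r3; have [hn1 hn2] := hM M (leqnn M).
have [_ _ _ nV] := hex (phi M); apply: nV; apply: hrV.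
rewrite /jdist gt_max; apply/andP; split.
  apply/bigmax_ltP; split => // i _; apply: supdist_lt => // s a.
  apply: le_lt_trans (tri _ i s a) _.
  have := hn1 s a; lra.
apply: supdist_lt => // s a; have := hn1 s a; lra.
Unshelve. all: by end_near.
Qed.
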